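(* Let $S$ be a set of $9$ points of $PG(3,2)$ which is a strong blocking set, i.e. for every plane $\sigma$ of $PG(3,2)$ the points of $\sigma\cap S$ span $\sigma$. Then: (i) every plane $\pi$ of $PG(3,2)$ contains at most $5$ points of $S$; (ii) if a plane $\pi$ contains a line $\ell$ all of whose points lie in $S$, then $\pi$ contains exactly $5$ points of $S$, and these $5$ points form two lines (each entirely contained in $S$) meeting in a point.
   Context: $PG(3,2)$ is the $3$-dimensional projective space over $\mathbb{F}_2$ (15 points, each line has 3 points, each plane has 7 points). A strong blocking set in $PG(3,2)$ is a set of points $S$ such that for every plane (hyperplane) $\sigma$, the span $\langle \sigma\cap S\rangle$ equals $\sigma$. The minimum possible size of a strong blocking set in $PG(3,2)$ is $9$; a strong blocking set of size $9$ is called a minimal strong blocking set. A ''line of $S$'' means a projective line all of whose points belong to $S$. *)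

(* Defs.v *)
From mathcomp Require Import all_boot all_order all_algebra.
Set Implicit Arguments. Unset Strict Implicit. Unset Printing Implicit Defensive.
Import GRing.Theory.
Local Open Scope ring_scope.

Definition vec := 'rV['F_2]_4.
Definition point := {x : vec | x != 0}.

Definition span_pts (P : {set point}) : {set point} :=
  [set y : point | (val y <= \sum_(x in P) <<val x>>)%MS].

Definition plane (a : point) : {set point} :=
  [set x : point | val x *m (val a)^T == 0].

Definition is_line (L : {set point}) : Prop :=
  exists x y : point, x != y /\ L = span_pts [set x; y].

Definition strong_blocking (S : {set point}) : Prop :=
  forall a : point, span_pts (plane a :&: S) = plane a.

(* Main.v *)
Require Import Defs.
From mathcomp Require Import all_boot all_order all_algebra zify.
Set Implicit Arguments. Unset Strict Implicit. Unset Printing Implicit Defensive.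
Import GRing.Theory.
Local Open Scope ring_scope.
Definition C := (bool * bool * bool * bool)%type.
Definition cb (b : bool) : 'F_2 := if b then 1 else 0.
Definition cbit (c : C) (j : nat) : bool :=
  let '(b0, b1, b2, b3) := c in
  match j with 0 => b0 | 1 => b1 | 2 => b2 | _ => b3 end.
Definition vC (c : C) : vec := \row_(j < 4) cb (cbit c j).
Definition i0 : 'I_4 := @Ordinal 4 0 isT.
Definition i1 : 'I_4 := @Ordinal 4 1 isT.
Definition i2 : 'I_4 := @Ordinal 4 2 isT.
Definition i3 : 'I_4 := @Ordinal 4 3 isT.
Definition cpv (v : vec) : C := (v 0 i0 == 1, v 0 i1 == 1, v 0 i2 == 1, v 0 i3 == 1).
Definition cp (p : point) : C := cpv (val p).
Definition z0 : C := (false, false, false, false).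
Definition dotC (c d : C) : bool :=
  let '(a0, a1, a2, a3) := c in let '(b0, b1, b2, b3) := d in
  (a0 && b0) (+) (a1 && b1) (+) (a2 && b2) (+) (a3 && b3).
Definition cadd (c d : C) : C :=
  let '(a0, a1, a2, a3) := c in let '(b0, b1, b2, b3) := d in
  (a0 (+) b0, a1 (+) b1, a2 (+) b2, a3 (+) b3).

Lemma F2_cases (e : 'F_2) : e = 0 \/ e = 1.
Proof. case: e => [[|[|n]] H]; [left|right|]; by [apply/val_inj|]. Qed.

Lemma cbK (e : 'F_2) : cb (e == 1) = e.
Proof. by case: (F2_cases e) => ->. Qed.

Lemma cb_eq1 b : (cb b == 1) = b.
Proof. by case: b. Qed.

Lemma cbD a b : cb a + cb b = cb (a (+) b).
Proof. case: a; case: b => //=; rewrite ?addr0 ?add0r //. by apply/eqP. Qed.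

Lemma cbM a b : cb a * cb b = cb (a && b).
Proof. by case: a; case: b => /=; rewrite ?mulr0 ?mul0r ?mulr1. Qed.

Lemma vCK v : vC (cpv v) = v.
Proof.
apply/rowP => j; rewrite mxE.
case: j => [[|[|[|[|n]]]] H] //=; rewrite cbK; congr (v _ _); by apply/val_inj.
Qed.

Lemma cpvK c : cpv (vC c) = c.
Proof. case: c => [[[a b] c] d]; by rewrite /cpv !mxE /= !cb_eq1. Qed.

Lemma vC_inj : injective vC.
Proof. by move=> c d E; rewrite -(cpvK c) E cpvK. Qed.

Lemma vC0 c : (vC c == 0) = (c == z0).
Proof.
apply/eqP/eqP => [E|->].
  by rewrite -(cpvK c) E /cpv !mxE.
by apply/rowP => j; rewrite !mxE; case: j => [[|[|[|[|n]]]] H].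
Qed.

Lemma vC_add c d : vC c + vC d = vC (cadd c d).
Proof.
case: c => [[[a0 a1] a2] a3]; case: d => [[[b0 b1] b2] b3].
apply/rowP => j; rewrite !mxE cbD.
by case: j => [[|[|[|[|n]]]] H].
Qed.

Lemma vC_dot c d : (vC c *m (vC d)^T == 0) = ~~ dotC c d.
Proof.
case: c => [[[a0 a1] a2] a3]; case: d => [[[b0 b1] b2] b3].
have -> : (vC (a0, a1, a2, a3) *m (vC (b0, b1, b2, b3))^T)
  = (cb ((a0 && b0) (+) (a1 && b1) (+) (a2 && b2) (+) (a3 && b3)))%:M.
  apply/matrixP => i j; rewrite !mxE.
  rewrite !big_ord_recr big_ord0 /= !mxE !cbM !add0r /=.
  have -> : (i == j) = true by rewrite !ord1.
  by rewrite !cbD /= mulr1n.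
rewrite /dotC; case: (_ (+) _) => /=; last by apply/eqP/matrixP => i j; rewrite !mxE mul0rn.
by apply/negP => /eqP/matrixP/(_ 0 0); rewrite !mxE /= => /eqP.
Qed.

Lemma cp_nz (p : point) : cp p != z0.
Proof. by rewrite -vC0 vCK; case: p. Qed.

Lemma val_cp (p : point) : val p = vC (cp p).
Proof. by rewrite vCK. Qed.

Lemma pt_eq (p q : point) : (p == q) = (cp p == cp q).
Proof.
apply/eqP/eqP => [->//|E]; apply/val_inj; by rewrite !val_cp E.
Qed.

Lemma inplane (x a : point) : (x \in plane a) = ~~ dotC (cp x) (cp a).
Proof. by rewrite inE !val_cp vC_dot. Qed.

Lemma p0P : vC (true, false, false, false) != 0. Proof. by rewrite vC0. Qed.
Definition p0 : point := Sub (vC (true, false, false, false)) p0P.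
Definition mkpt (c : C) : point := insubd p0 (vC c).
Lemma cp_mkpt c : c != z0 -> cp (mkpt c) = c.
Proof. by move=> H; rewrite /cp /mkpt insubdK ?cpvK // unfold_in /= vC0. Qed.

Definition pplus (x y : point) : point := mkpt (cadd (cp x) (cp y)).

Lemma cadd_nz c d : c != z0 -> d != z0 -> c != d -> cadd c d != z0.
Proof.
by case: c => [[[a0 a1] a2] a3]; case: d => [[[b0 b1] b2] b3];
  case: a0; case: a1; case: a2; case: a3; case: b0; case: b1; case: b2; case: b3.
Qed.

Lemma cp_pplus (x y : point) : x != y -> cp (pplus x y) = cadd (cp x) (cp y).
Proof. by rewrite pt_eq => H; rewrite cp_mkpt // cadd_nz ?cp_nz. Qed.

Lemma val_pplus (x y : point) : x != y -> val (pplus x y) = val x + val y.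
Proof. by move=> H; rewrite !val_cp cp_pplus // vC_add. Qed.

Definition allC : seq C := [:: (false, false, false, false); (true, false, false, false); (false, true, false, false); (true, true, false, false); (false, false, true, false); (true, false, true, false); (false, true, true, false); (true, true, true, false); (false, false, false, true); (true, false, false, true); (false, true, false, true); (true, true, false, true); (false, false, true, true); (true, false, true, true); (false, true, true, true); (true, true, true, true)].
Definition nzC := [seq c <- allC | c != z0].
Lemma cp_in (p : point) : cp p \in nzC.
Proof.
rewrite mem_filter cp_nz /=; case: (cp p) => [[[a b] c] d].
by case: a; case: b; case: c; case: d.
Qed.

Lemma inplane_mx (x a : point) : (x \in plane a) = (val x <= kermx (val a)^T)%MS.
Proof. by rewrite inE sub_kermx. Qed.

Lemma span_sub_plane (P : {set point}) (b : point) : P \subset plane b -> span_pts P \subset plane b.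
Proof.
move=> H; apply/subsetP => z; rewrite inE => Hz; rewrite inplane_mx.
apply: submx_trans Hz _; apply/sumsmx_subP => w Hw.
by rewrite genmxE -inplane_mx; exact: (subsetP H).
Qed.

Lemma span_line (x y : point) : x != y -> span_pts [set x; y] = [set x; y; pplus x y].
Proof.
move=> xy; apply/setP => z; rewrite !inE.
rewrite big_setU1 /= ?big_set1 ?inE //.
rewrite (adds_eqmx (genmxE _) (genmxE _)).
apply/idP/idP.
  move/sub_addsmxP => [[u v]] /= E.
  rewrite !pt_eq -!(inj_eq vC_inj) -!val_cp val_pplus //.
  rewrite [u]mx11_scalar [v]mx11_scalar !mul_scalar_mx in E.
  case: (F2_cases (u 0 0)) E => ->; case: (F2_cases (v 0 0)) => -> ;
    rewrite ?scale0r ?scale1r ?addr0 ?add0r => E; have {E} E : val z = _ := E;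
    try (rewrite E ?eqxx ?orbT //).
  by case: z E => /= w nz E; rewrite E eqxx in nz.
case/orP => [/orP[]|] /eqP ->.
- exact: addsmxSl.
- exact: addsmxSr.
- by rewrite val_pplus // addmx_sub_adds.
Qed.

Definition eqC (c d : C) : bool :=
  let '(a0, a1, a2, a3) := c in let '(b0, b1, b2, b3) := d in
  [&& eqb a0 b0, eqb a1 b1, eqb a2 b2 & eqb a3 b3].
Lemma eqCE c d : eqC c d = (c == d).
Proof.
case: c => [[[a0 a1] a2] a3]; case: d => [[[b0 b1] b2] b3].
by rewrite /eqC !xpair_eqE; case: a0; case: a1; case: a2; case: a3;
  case: b0; case: b1; case: b2; case: b3.
Qed.
Definition in3 (z x y w : C) := [|| eqC z x, eqC z y | eqC z w].
Definition pl (a x : C) := ~~ dotC x a.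
Definition CF0c := all (fun a => all (fun b => eqC a b || has (fun z => pl a z && ~~ pl b z) nzC) nzC) nzC.
Definition CF1c := all (fun a => has (fun d => ~~ pl a d) nzC) nzC.
Definition CF2c := all (fun a => all (fun x => all (fun y => all (fun z =>
   [|| pl a x, pl a y, pl a z |
   has (fun b => [&& ~~ eqC b a, ~~ pl b x, ~~ pl b y & ~~ pl b z]) nzC]) nzC) nzC) nzC) nzC.
Definition CF3c := all (fun a => all (fun x => all (fun y =>
   [|| eqC x y, ~~ pl a x, ~~ pl a y |
   has (fun b1 => let b2 := cadd a b1 in
        [&& ~~ eqC b1 a, pl b1 x && pl b1 y, pl b2 x && pl b2 y,
        pl b1 (cadd x y) && pl b2 (cadd x y) &
        all (fun z => in3 z x y (cadd x y) || (pl a z + pl b1 z + pl b2 z == 1)%N) nzC]) nzC]) nzC) nzC) nzC.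
Definition CF4c := all (fun a => all (fun x => all (fun y => all (fun p => all (fun q =>
   [|| eqC x y || ~~ pl a x, ~~ pl a y || ~~ pl a p, ~~ pl a q || eqC p q,
       in3 p x y (cadd x y) || in3 q x y (cadd x y) |
       in3 (cadd p q) x y (cadd x y)]) nzC) nzC) nzC) nzC) nzC.
Lemma CF0T : CF0c. Proof. by vm_compute. Qed.
Lemma CF1T : CF1c. Proof. by vm_compute. Qed.
Lemma CF2T : CF2c. Proof. by vm_compute. Qed.
Lemma CF3T : CF3c. Proof. by vm_compute. Qed.
Lemma CF4T : CF4c. Proof. by vm_compute. Qed.

Arguments nzC : simpl never.
Arguments pl : simpl never.
Lemma inplC (x a : point) : (x \in plane a) = pl (cp a) (cp x).
Proof. by rewrite inplane. Qed.

Opaque plane.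

Lemma allnz (P : pred C) : all P nzC -> forall p : point, P (cp p).
Proof. by move/allP => H p; apply: H; apply: cp_in. Qed.

Lemma nzC_mk c : c \in nzC -> cp (mkpt c) = c.
Proof. by rewrite mem_filter => /andP[H _]; rewrite cp_mkpt. Qed.

Lemma in3E (x y z : point) : x != y ->
  (z \in [set x; y; pplus x y]) = in3 (cp z) (cp x) (cp y) (cadd (cp x) (cp y)).
Proof. by move=> xy; rewrite !inE !pt_eq cp_pplus // /in3 !eqCE orbA. Qed.

Lemma caddz c d : (cadd c d == z0) = (c == d).
Proof.
case: c => [[[a0 a1] a2] a3]; case: d => [[[b0 b1] b2] b3].
by rewrite !xpair_eqE; case: a0; case: a1; case: a2; case: a3;
  case: b0; case: b1; case: b2; case: b3.
Qed.

Lemma PF0 (a b : point) : a != b -> exists2 z : point, z \in plane a & z \notin plane b.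
Proof.
move=> ab; move: (allnz CF0T a) => /allP/(_ _ (cp_in b)).
rewrite eqCE -pt_eq (negbTE ab) orFb => /hasP[z zin /andP[H1 H2]].
by exists (mkpt z); rewrite inplC nzC_mk.
Qed.

Lemma PF1 (a : point) : exists d : point, d \notin plane a.
Proof.
move: (allnz CF1T a) => /hasP[z zin H].
by exists (mkpt z); rewrite inplC nzC_mk.
Qed.

Lemma PF2 (a x y z : point) : x \notin plane a -> y \notin plane a -> z \notin plane a ->
  exists b : point, [/\ b != a, x \notin plane b, y \notin plane b & z \notin plane b].
Proof.
move=> Hx Hy Hz; rewrite !inplC in Hx Hy Hz.
move: (allnz CF2T a) => /allP/(_ _ (cp_in x))/allP/(_ _ (cp_in y))/allP/(_ _ (cp_in z)).
rewrite (negbTE Hx) (negbTE Hy) (negbTE Hz) !orFb => /hasP[b bin /and4P[H1 H2 H3 H4]].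
exists (mkpt b); rewrite !inplC pt_eq nzC_mk // -eqCE; by split.
Qed.

Lemma PF3 (a x y : point) : x != y -> x \in plane a -> y \in plane a ->
  exists b1 b2 : point, [/\ [set x; y; pplus x y] \subset plane b1,
                    [set x; y; pplus x y] \subset plane b2 &
     forall z : point, z \notin [set x; y; pplus x y] ->
       ((z \in plane a) + (z \in plane b1) + (z \in plane b2) = 1)%N].
Proof.
move=> xy; rewrite !inplC => Hx Hy.
move: (allnz CF3T a) => /allP/(_ _ (cp_in x))/allP/(_ _ (cp_in y)).
rewrite Hx Hy eqCE -pt_eq (negbTE xy) -[~~ true]/false !orFb => /hasP[b bin].
case/and5P => ba /andP[b1x b1y] /andP[b2x b2y] /andP[b1s b2s] /allP Hall.
have b2nz : cadd (cp a) b != z0.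
  by rewrite caddz eq_sym -eqCE.
exists (mkpt b), (mkpt (cadd (cp a) b)); split.
- apply/subsetP => z Hz; rewrite inplC; move: Hz; rewrite !inE => /orP[/orP[]|] /eqP ->; rewrite nzC_mk //.
  by rewrite cp_pplus.
- apply/subsetP => z Hz; rewrite inplC; move: Hz; rewrite !inE => /orP[/orP[]|] /eqP ->; rewrite cp_mkpt //.
  by rewrite cp_pplus.
- move=> z; rewrite in3E // => Hz.
  have := Hall _ (cp_in z); rewrite (negbTE Hz) orFb => /eqP E; apply: (etrans _ E).
  congr (_ + _ + _)%N; rewrite inplC ?(nzC_mk bin) ?(cp_mkpt b2nz) //.
Qed.

Lemma PF4 (a x y p q : point) : x != y -> x \in plane a -> y \in plane a ->
  p \in plane a -> q \in plane a -> p != q ->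
  p \notin [set x; y; pplus x y] -> q \notin [set x; y; pplus x y] ->
  pplus p q \in [set x; y; pplus x y].
Proof.
move=> xy; rewrite !inplC !in3E // => Hx Hy Hp Hq pq Hp' Hq'.
move: (allnz CF4T a) => /allP/(_ _ (cp_in x))/allP/(_ _ (cp_in y))
  /allP/(_ _ (cp_in p))/allP/(_ _ (cp_in q)).
rewrite Hx Hy Hp Hq !eqCE -!pt_eq (negbTE xy) (negbTE pq) (negbTE Hp') (negbTE Hq') -[~~ true]/false !orFb.
by rewrite cp_pplus.
Qed.

Lemma caddl c d : (cadd c d == c) = (d == z0).
Proof.
case: c => [[[a0 a1] a2] a3]; case: d => [[[b0 b1] b2] b3].
by rewrite !xpair_eqE; case: a0; case: a1; case: a2; case: a3;
  case: b0; case: b1; case: b2; case: b3.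
Qed.

Lemma caddr c d : (cadd c d == d) = (c == z0).
Proof.
case: c => [[[a0 a1] a2] a3]; case: d => [[[b0 b1] b2] b3].
by rewrite !xpair_eqE; case: a0; case: a1; case: a2; case: a3;
  case: b0; case: b1; case: b2; case: b3.
Qed.

Lemma pplus_neq (x y : point) : x != y -> (pplus x y != x) && (pplus x y != y).
Proof. by move=> xy; rewrite !pt_eq cp_pplus // caddl caddr !cp_nz. Qed.

Lemma card_line (x y : point) : x != y -> #|[set x; y; pplus x y]| = 3%N.
Proof.
move=> xy; case/andP: (pplus_neq xy) => h1 h2.
rewrite setUC cardsU1 cards2 !inE negb_or h1 h2 xy.
done.
Qed.

Definition SBc (S : {set point}) := forall a b : point, a != b ->
  exists2 z : point, z \in S & (z \in plane a) && (z \notin plane b).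

Lemma SB_SBc (S : {set point}) : strong_blocking S -> SBc S.
Proof.
move=> SB a b ab.
case: (boolP [exists z : point, [&& z \in S, z \in plane a & z \notin plane b]]).
  case/existsP => z /and3P[h1 h2 h3]; exists z; [exact: h1 | exact/andP].
move/existsPn => H; exfalso.
have sub : plane a :&: S \subset plane b.
  apply/subsetP => z; rewrite in_setI => /andP[za zS].
  apply/negPn/negP => zb; case/negP: (H z); apply/and3P; split; [exact: zS|exact: za|exact: zb].
have := span_sub_plane sub; rewrite SB => /subsetP sab.
by case: (PF0 ab) => z /sab ->.
Qed.

Lemma part1 (S : {set point}) : #|S| = 9%N -> SBc S ->
  forall a : point, (#|plane a :&: S| <= 5)%N.
Proof.
move=> cS SB a; rewrite leqNgt; apply/negP => H6.
set T := S :\: plane a.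
have cT : (#|T| <= 3)%N.
  have := cardsID (plane a) S; rewrite setIC cS -/T; lia.
case: (PF1 a) => d dna.
set s := enum T.
have nthT : forall i, nth d s i \notin plane a.
  move=> i; case: (ltnP i (size s)) => Hi; last by rewrite nth_default.
  have : nth d s i \in T by rewrite -mem_enum mem_nth.
  by rewrite inE => /andP[].
case: (PF2 (nthT 0%N) (nthT 1%N) (nthT 2%N)) => b [ba h0 h1 h2].
case: (SB b a ba) => w wS /andP[wb wa].
have wT : w \in s by rewrite mem_enum inE wS wa.
have hi : (index w s < 3)%N.
  have : (index w s < size s)%N by rewrite index_mem.
  rewrite /s -cardE => H; exact: (leq_trans H cT).
have := nth_index d wT.
by case: (index w s) hi => [|[|[|]]] // _ E; [move: h0|move: h1|move: h2]; rewrite E wb.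
Qed.

Lemma cardI_sum (D P : {set point}) : (\sum_(z in D) (z \in P))%N = #|D :&: P|.
Proof.
rewrite -sum1_card.
have -> : (\sum_(z in D :&: P) 1 = \sum_(z in D | z \in P) 1)%N.
  by apply: eq_bigl => z; rewrite inE.
by rewrite big_mkcondr /=; apply: eq_bigr => z _; case: (z \in P).
Qed.

Lemma card_split (S L P : {set point}) : L \subset S -> L \subset P ->
  #|P :&: S| = (#|L| + #|(S :\: L) :&: P|)%N.
Proof.
move=> LS LP.
have E1 : (P :&: S) :&: L = L.
  apply/setP => z; rewrite !in_setI; case: (boolP (z \in L)) => zL.
    by rewrite (subsetP LS _ zL) (subsetP LP _ zL).
  by rewrite andbF.
have E2 : (P :&: S) :\: L = (S :\: L) :&: P.
  apply/setP => z; rewrite !in_setI !in_setD in_setI.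
  by case: (z \in L); case: (z \in S); case: (z \in P).
by rewrite -(cardsID L (P :&: S)) E1 E2.
Qed.

Lemma count_abs (S L Pa P1 P2 : {set point}) :
  #|S| = 9%N -> #|L| = 3%N -> L \subset S -> L \subset Pa -> L \subset P1 -> L \subset P2 ->
  (forall z, z \notin L -> ((z \in Pa) + (z \in P1) + (z \in P2) = 1)%N) ->
  (#|Pa :&: S| <= 5)%N -> (#|P1 :&: S| <= 5)%N -> (#|P2 :&: S| <= 5)%N ->
  #|Pa :&: S| = 5%N /\ #|(S :\: L) :&: Pa| = 2%N.
Proof.
move=> cS cL LS LPa LP1 LP2 part ha h1 h2.
have cD : #|S :\: L| = 6%N.
  have h := cardsID L S; rewrite (setIidPr LS) in h; lia.
have sum6 : (#|(S :\: L) :&: Pa| + #|(S :\: L) :&: P1| + #|(S :\: L) :&: P2| = 6)%N.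
  rewrite -!cardI_sum -!big_split /= -cD -sum1_card; apply: eq_bigr => z.
  by rewrite in_setD => /andP[zL _]; exact: part z zL.
have ca := card_split LS LPa; have c1 := card_split LS LP1; have c2 := card_split LS LP2.
lia.
Qed.

Lemma fano_abs (S L Pa : {set point}) (p q w : point) :
  p != q -> w \in L -> L \subset S -> L \subset Pa ->
  (S :\: L) :&: Pa = [set p; q] ->
  [/\ L != [set p; q; w], [set p; q; w] \subset S,
       Pa :&: S = L :|: [set p; q; w] & #|L :&: [set p; q; w]| = 1%N].
Proof.
move=> pq wL LS LPa Epq.
have pD : p \in (S :\: L) :&: Pa by rewrite Epq !inE eqxx.
have qD : q \in (S :\: L) :&: Pa by rewrite Epq !inE eqxx orbT.
move: pD qD; rewrite !in_setI !in_setD => /andP[/andP[pL pS] pa] /andP[/andP[qL qS] qa].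
split.
- apply/negP => /eqP E; move: pL; rewrite E !in_setU !in_set1 eqxx. done.
- apply/subsetP => z; rewrite !in_setU !in_set1 => /orP[/orP[]|] /eqP -> //.
  exact: (subsetP LS _ wL).
- apply/setP => z; rewrite in_setU; case: (boolP (z \in L)) => zL /=.
    by rewrite in_setI (subsetP LPa _ zL) (subsetP LS _ zL).
  have : (z \in (S :\: L) :&: Pa) = (z \in [set p; q]) by rewrite Epq.
  rewrite in_setI in_setD zL /= => E; rewrite in_setI andbC E.
  have nz : z != w by apply: contraNneq zL => ->.
  by rewrite !in_setU !in_set1 (negbTE nz) orbF.
have -> : L :&: [set p; q; w] = [set w].
  apply/setP => z; rewrite in_setI in_set1.
  case: (boolP (z == w)) => [/eqP->|nz].
    by rewrite wL !in_setU !in_set1 eqxx orbT.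
  rewrite !in_setU !in_set1 (negbTE nz) orbF.
  apply/negP => /andP[zL /orP[]/eqP E]; subst z; by [rewrite zL in pL|rewrite zL in qL].
by rewrite cards1.
Qed.

Lemma part2 (S : {set point}) (a : point) (l : {set point}) : #|S| = 9%N -> SBc S -> is_line l ->
  l \subset plane a -> l \subset S ->
      #|plane a :&: S| = 5%N /\
      exists l1 l2 : {set point},
        [/\ is_line l1, is_line l2, l1 != l2, l1 \subset S &
             l2 \subset S] /\
        plane a :&: S = l1 :|: l2 /\ #|l1 :&: l2| = 1%N.
Proof.
move=> cS SB [x [y [xy El]]] lP lS.
have P1 := part1 cS SB.
have EL : l = [set x; y; pplus x y] by rewrite El span_line.
rewrite EL in lP lS.
have xa : x \in plane a by apply: (subsetP lP); rewrite !in_setU !in_set1 eqxx.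
have ya : y \in plane a by apply: (subsetP lP); rewrite !in_setU !in_set1 eqxx ?orbT.
case: (PF3 xy xa ya) => b1 [b2 [Lb1 Lb2 part]].
have [c5 cDa] := count_abs cS (card_line xy) lS lP Lb1 Lb2 part (P1 a) (P1 b1) (P1 b2).
split => //.
have /cards2P [p [q [pq Epq]]] : #|(S :\: [set x; y; pplus x y]) :&: plane a| == 2%N
  by rewrite cDa.
have pD : p \in (S :\: [set x; y; pplus x y]) :&: plane a by rewrite Epq !inE eqxx.
have qD : q \in (S :\: [set x; y; pplus x y]) :&: plane a by rewrite Epq !inE eqxx orbT.
move: pD qD; rewrite !in_setI !in_setD => /andP[/andP[pL pS] pa] /andP[/andP[qL qS] qa].
have ppq := PF4 xy xa ya pa qa pq pL qL.
have iL1 : is_line [set x; y; pplus x y] by exists x, y; rewrite span_line.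
have iL2 : is_line [set p; q; pplus p q] by exists p, q; rewrite span_line.
have [h1 h2 h3 h4] := fano_abs pq ppq lS lP Epq.
exists [set x; y; pplus x y], [set p; q; pplus p q].
by split; first split.
Qed.

Theorem lemma2p1 (S : {set point}) :
  #|S| = 9%N -> strong_blocking S ->
  (forall a : point, #|plane a :&: S| <= 5)%N /\
  (forall (a : point) (l : {set point}),
      is_line l -> l \subset plane a -> l \subset S ->
      #|plane a :&: S| = 5%N /\
      exists l1 l2 : {set point},
        [/\ is_line l1, is_line l2, l1 != l2, l1 \subset S &
             l2 \subset S] /\
        plane a :&: S = l1 :|: l2 /\ #|l1 :&: l2| = 1%N).
Proof.
move=> cS /SB_SBc SB; split; first exact: part1.
by move=> a l; apply: part2.
Qed.
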